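(* Consider the ride-hailing model in the context. The optimal value of $\mathcal{OPT}$ (the optimal platform profit), viewed as a function of the AV fleet mass $M$ and of the CV fleet mass $N$ with all other parameters fixed, is non-decreasing in $M$ and non-decreasing in $N$.
   Context: Model. There are $L$ regions $\{1,\dots,L\}$. For regions $i,j$, $b_{ij}\ge0$ is the customer rate from $i$ to $j$; $b_i=\sum_j b_{ij}$ (assumed $>0$), $q_{ij}=b_{ij}/b_i$. Travel times satisfy $t_{ij}>0$ for $i\ne j$, $t_{ii}=0$. Constants: $p>0$, $c\ge0$, $R\in(0,1)$, CV fleet mass $N>0$, AV fleet mass $M\ge0$. For $i,\alpha$: $\tau^{dr}_{i\alpha}=t_{i\alpha}+\sum_j q_{\alpha j}t_{\alpha j}$, $r^A_{i\alpha}=p\sum_j q_{\alpha j}t_{\alpha j}-c\tau^{dr}_{i\alpha}$, $r^C_{i\alpha}=p(1-R)\sum_j q_{\alpha j}t_{\alpha j}-c\tau^{dr}_{i\alpha}$, $r^{C2P}_{i\alpha}=pR\sum_j q_{\alpha j}t_{\alpha j}$. A matrix $\bm x\in\mathbb R^{L\times L}_{\ge0}$ satisfies flow balance if $\sum_j(\sum_k x_{kj})q_{ji}=\sum_\alpha x_{i\alpha}$ for all $i$. $\mathcal{CV}(\bm b^C)$: maximize $N\log\sum_{i,\alpha}r^C_{i\alpha}x_{i\alpha}-\sum_{i,\alpha}\tau^{dr}_{i\alpha}x_{i\alpha}$ over $\bm x\ge0$ satisfying flow balance and $\sum_j x_{ji}\le b^C_i$ for all $i$; $\pi(\bm b^C)=\sum_{i,\alpha}r^{C2P}_{i\alpha}x_{i\alpha}$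 for an optimal solution $\bm x$ (same for all optimal solutions). $\mathcal{OPT}$: maximize $\sum_{i,\alpha}r^A_{i\alpha}x^A_{i\alpha}+\pi(\bm b^C)$ over $\bm b^C\in\mathbb R^L_{\ge0}$, $\bm x^A\in\mathbb R^{L\times L}_{\ge0}$ subject to $\sum_j x^A_{ji}+b^C_i\le b_i$ for all $i$, flow balance for $\bm x^A$, and $\sum_{i,\alpha}\tau^{dr}_{i\alpha}x^A_{i\alpha}\le M$. *)

(* Defs.v *)
From HB Require Import structures.
From mathcomp Require Import all_boot all_order all_algebra.
From mathcomp Require Import all_classical all_reals all_analysis.
Set Implicit Arguments. Unset Strict Implicit. Unset Printing Implicit Defensive.
Import Order.TTheory GRing.Theory Num.Theory.
Local Open Scope ring_scope.
Local Open Scope classical_set_scope.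

Section RideHailing.
Variables (R : realType) (L : nat).
Variables (b t : 'I_L -> 'I_L -> R) (p c Rc : R).

Definition brate (i : 'I_L) : R := \sum_(j < L) b i j.
Definition qm (i j : 'I_L) : R := b i j / brate i.
Definition trip_len (a : 'I_L) : R := \sum_(j < L) qm a j * t a j.
Definition tau_dr (i a : 'I_L) : R := t i a + trip_len a.
Definition rA (i a : 'I_L) : R := p * trip_len a - c * tau_dr i a.
Definition rC (i a : 'I_L) : R := p * (1 - Rc) * trip_len a - c * tau_dr i a.
Definition rC2P (i a : 'I_L) : R := p * Rc * trip_len a.

Definition lsum (w x : 'I_L -> 'I_L -> R) : R :=
  \sum_(i < L) \sum_(a < L) w i a * x i a.

Definition flow_balance (x : 'I_L -> 'I_L -> R) : Prop :=
  forall i : 'I_L,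
    \sum_(j < L) (\sum_(k < L) x k j) * qm j i = \sum_(a < L) x i a.

Definition nonneg_mx (x : 'I_L -> 'I_L -> R) : Prop :=
  forall i a, 0 <= x i a.

Definition cv_feasible (bC : 'I_L -> R) (x : 'I_L -> 'I_L -> R) : Prop :=
  nonneg_mx x /\ flow_balance x /\ forall i, \sum_(j < L) x j i <= bC i.

(* objective of CV(b^C); log of a nonpositive number is taken as -oo *)
Definition cv_obj (N : R) (x : 'I_L -> 'I_L -> R) : \bar R :=
  let S := lsum rC x in
  if 0 < S then (N * ln S - lsum tau_dr x)%:E else -oo%E.

Definition cv_optimal (N : R) (bC : 'I_L -> R) (x : 'I_L -> 'I_L -> R) : Prop :=
  cv_feasible bC x /\
  forall y, cv_feasible bC y -> (cv_obj N y <= cv_obj N x)%E.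

Definition opt_feasible (M : R) (bC : 'I_L -> R) (xA : 'I_L -> 'I_L -> R) : Prop :=
  (forall i, 0 <= bC i) /\ nonneg_mx xA /\
  (forall i, \sum_(j < L) xA j i + bC i <= brate i) /\
  flow_balance xA /\ lsum tau_dr xA <= M.

(* optimal value of OPT: pi(b^C) = sum r^{C2P} x over an optimal x of CV(b^C) *)
Definition opt_value (M N : R) : \bar R :=
  ereal_sup [set v : \bar R | exists bC xA xC,
     opt_feasible M bC xA /\ cv_optimal N bC xC /\
     v = (lsum rA xA + lsum rC2P xC)%:E].
End RideHailing.

(* Main.v *)
Require Import Defs.
From HB Require Import structures.
From mathcomp Require Import all_boot all_order all_algebra.
From mathcomp Require Import all_classical all_reals all_analysis.
From mathcomp Require Import ring lra.
Import Order.TTheory GRing.Theory Num.Theory.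
Import numFieldNormedType.Exports.
Local Open Scope classical_set_scope.
Local Open Scope ring_scope.

Section Aux.
Variables (R : realType).

Lemma cont_sum (T : topologicalType) n (f : 'I_n -> T -> R) :
  (forall i, continuous (f i)) -> continuous (fun v => \sum_(i < n) f i v).
Proof.
elim: n f => [|n IH] f hf.
  under eq_fun do rewrite big_ord0; exact: cst_continuous.
under eq_fun do rewrite big_ord_recr /=.
move=> x; apply: (@continuousD _ _ _ (fun v => \sum_(i < n) f (widen_ord (leqnSn n) i) v) (f ord_max)).
  by apply: IH => i; apply: hf.
exact: hf.
Qed.

Lemma closed_leF (T : topologicalType) (f g : T -> R) :
  continuous f -> continuous g -> closed [set v | f v <= g v].
Proof.
move=> cf cg.
have -> : [set v | f v <= g v] = (fun v => g v - f v) @^-1` [set x | 0 <= x].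
  by apply/seteqP; split => v /=; rewrite subr_ge0.
apply: preimage_closed; last exact: closed_ge.
by move=> x _; exact: (@continuousB _ _ _ g f x (cg x) (cf x)).
Qed.

Lemma closed_eqF (T : topologicalType) (f g : T -> R) :
  continuous f -> continuous g -> closed [set v | f v = g v].
Proof.
move=> cf cg.
have -> : [set v | f v = g v] = (fun v => g v - f v) @^-1` [set x | x = 0].
  by apply/seteqP; split => v /= h; [rewrite h subrr | apply/esym/eqP; rewrite -subr_eq0 h].
apply: preimage_closed; last exact: closed_eq.
by move=> x _; exact: (@continuousB _ _ _ g f x (cg x) (cf x)).
Qed.

Lemma closed_forall (T : topologicalType) (I : Type) (P : I -> set T) :
  (forall i, closed (P i)) -> closed [set v | forall i, P i v].
Proof.
move=> hP.
have -> : [set v | forall i, P i v] = \bigcap_(i in setT) P i.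
  by apply/seteqP; split => v /= h i //; apply: h.
by apply: closed_bigI => i _; apply: hP.
Qed.
Lemma contM (T : topologicalType) (f g : T -> R) :
  continuous f -> continuous g -> continuous (fun v => f v * g v).
Proof. by move=> cf cg x; apply: continuousM; [exact: cf | exact: cg]. Qed.

Lemma contB (T : topologicalType) (f g : T -> R) :
  continuous f -> continuous g -> continuous (fun v => f v - g v).
Proof. by move=> cf cg x; apply: continuousB; [exact: cf | exact: cg]. Qed.

Lemma contC (T : topologicalType) (k : R) : continuous (fun _ : T => k).
Proof. exact: cst_continuous. Qed.

Lemma contLnMax (T : topologicalType) (f : T -> R) d :
  0 < d -> continuous f -> continuous (fun v => ln (Num.max (f v) d)).
Proof.
move=> hd cf v.
have h1 := (@continuous_max R _ f (fun=> d) v (cf v) (@cst_continuous _ _ d v)).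
have h2 : {for Num.max (f v) d, continuous (@ln R)}.
  by apply: continuous_ln; rewrite lt_max hd orbT.
exact: (continuous_comp h1 h2).
Qed.
End Aux.

Section Model.
Variables (R : realType) (L : nat) (b t : 'I_L -> 'I_L -> R) (p c Rc : R).
Hypotheses (hb : forall i j, 0 <= b i j) (hbi : forall i, 0 < brate b i)
  (ht : forall i j, i != j -> 0 < t i j) (ht0 : forall i, t i i = 0)
  (hp : 0 < p) (hc : 0 <= c) (hR0 : 0 < Rc) (hR1 : Rc < 1).

Let S x := lsum (rC b t p c Rc) x.
Let T x := lsum (tau_dr b t) x.
Let P x := lsum (rC2P b t p Rc) x.

Lemma qm_ge0 i j : 0 <= qm b i j.
Proof. by rewrite /qm divr_ge0 // ltW. Qed.

Lemma t_ge0 i a : 0 <= t i a.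
Proof. by case: (eqVneq i a) => [->|/ht/ltW //]; rewrite ht0. Qed.

Lemma tau_ge0 i a : 0 <= tau_dr b t i a.
Proof.
rewrite /tau_dr /trip_len addr_ge0 ?t_ge0 //.
by apply: sumr_ge0 => j _; rewrite mulr_ge0 ?qm_ge0 ?t_ge0.
Qed.

Lemma lsum_ge0 (w x : 'I_L -> 'I_L -> R) :
  (forall i a, 0 <= w i a) -> nonneg_mx x -> 0 <= lsum w x.
Proof.
move=> hw hx; apply: sumr_ge0 => i _; apply: sumr_ge0 => a _.
by rewrite mulr_ge0.
Qed.

Lemma lsum_lin k1 k2 (w1 w2 x : 'I_L -> 'I_L -> R) :
  lsum (fun i a => k1 * w1 i a + k2 * w2 i a) x = k1 * lsum w1 x + k2 * lsum w2 x.
Proof.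
rewrite /lsum !mulr_sumr -big_split; apply: eq_bigr => i _.
rewrite !mulr_sumr -big_split; apply: eq_bigr => a _ /=; ring.
Qed.

Lemma pi_eq x : (1 - Rc) * P x = Rc * (S x + c * T x).
Proof.
have -> : (1 - Rc) * P x = lsum (fun i a => (1 - Rc) * rC2P b t p Rc i a + 0 * rC2P b t p Rc i a) x.
  by rewrite lsum_lin mul0r addr0.
have -> : Rc * (S x + c * T x) = lsum (fun i a => Rc * rC b t p c Rc i a + (Rc * c) * tau_dr b t i a) x.
  by rewrite lsum_lin /S /T; ring.
congr lsum; apply/funext => i; apply/funext => a.
rewrite /rC2P /rC; ring.
Qed.

Lemma pi_mono x y : S x <= S y -> T x <= T y -> P x <= P y.
Proof.
move=> hS hT.
have h1 : 0 < 1 - Rc by rewrite subr_gt0.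
rewrite -(ler_pM2l h1) !pi_eq (ler_pM2l hR0) lerD //.
by rewrite ler_wpM2l.
Qed.

Definition X (v : 'rV[R]_(L * L)) : 'I_L -> 'I_L -> R :=
  fun i a => v ord0 (mxvec_index i a).
Definition toV (x : 'I_L -> 'I_L -> R) : 'rV[R]_(L * L) :=
  mxvec (\matrix_(i, a) x i a).

Lemma XtoV x : X (toV x) = x.
Proof. by apply/funext => i; apply/funext => a; rewrite /X /toV mxvecE mxE. Qed.

Lemma cont_X i a : continuous (fun v => X v i a).
Proof. exact: coord_continuous. Qed.

Lemma cont_lsum w : continuous (fun v => lsum w (X v)).
Proof.
apply: cont_sum => i; apply: cont_sum => a v.
by apply: continuousM; [exact: cst_continuous | exact: cont_X].
Qed.

Lemma obj_pos N x : 0 < S x -> cv_obj b t p c Rc N x = (N * ln (S x) - T x)%:E.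
Proof. by move=> h; rewrite /cv_obj /= -/(S x) h. Qed.

Lemma obj_npos N x : ~~ (0 < S x) -> cv_obj b t p c Rc N x = -oo%E.
Proof. by move=> h; rewrite /cv_obj /= -/(S x) (negbTE h). Qed.

Lemma exists_opt N bC x0 : 0 < N -> cv_feasible b bC x0 -> 0 < S x0 ->
  exists x, cv_optimal b t p c Rc N bC x.
Proof.
move=> hN hf0 hS0.
set o0 := N * ln (S x0) - T x0.
set d := expR ((o0 - 1) / N).
have hd : 0 < d := expR_gt0 _.
have hT0 : 0 <= T x0 := lsum_ge0 _ _ tau_ge0 hf0.1.
have hlnd : N * ln d = o0 - 1 by rewrite /d expRK mulrC divfK // gt_eqF.
have hdS : d <= S x0.
  rewrite -(lnK (x:=S x0)) ?posrE // /d ler_expR ler_pdivrMr //.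
  rewrite /o0 mulrC; lra.
set F := [set v | nonneg_mx (X v)] `&` [set v | flow_balance b (X v)] `&`
  [set v | forall i, \sum_(j < L) X v j i <= bC i] `&` [set v | d <= S (X v)].
have Fx v : F v <-> cv_feasible b bC (X v) /\ d <= S (X v).
  by split => [[[[? ?] ?] ?]|[[? [? ?]] ?]].
have clF : closed F.
  apply: closedI; last by apply: closed_leF; [exact: cst_continuous | exact: cont_lsum].
  apply: closedI; last first.
    apply: (@closed_forall _ _ (fun i => [set v | \sum_(j < L) X v j i <= bC i])) => i.
    apply: closed_leF; last exact: cst_continuous.
    by apply: cont_sum => j; exact: cont_X.
  apply: closedI.
    apply: (@closed_forall _ _ (fun i => [set v | forall a, 0 <= X v i a])) => i.
    apply: (@closed_forall _ _ (fun a => [set v | 0 <= X v i a])) => a.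
    by apply: closed_leF; [exact: cst_continuous | exact: cont_X].
  apply: (@closed_forall _ _ (fun i => [set v | \sum_(j < L) (\sum_(k < L) X v k j) * qm b j i = \sum_(a < L) X v i a])) => i.
  apply: closed_eqF; last by apply: cont_sum => a; exact: cont_X.
  apply: cont_sum => j; apply: contM; last exact: contC.
  by apply: cont_sum => k; exact: cont_X.

set Bd := \sum_(i < L) `|bC i|.
have cB : compact [set v : 'rV[R]_(L * L) | forall k, `[0, Bd]%classic (v ord0 k)].
  by apply: (rV_compact (A := fun _ => `[0, Bd]%classic)) => _; exact: segment_compact.
have cF : compact F.
  apply: (subclosed_compact clF cB) => v Fv k.
  have [[hn [hfl hcap]] _] := (Fx v).1 Fv.
  case: (mxvec_indexP k) => i a.
  have -> : v ord0 (mxvec_index i a) = X v i a by [].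
  rewrite /= in_itv /=; apply/andP; split; first exact: hn.
  apply: (le_trans (y := \sum_(j < L) X v j a)).
    rewrite (bigD1 i) //= lerDl; apply: sumr_ge0 => j _; exact: hn.
  apply: (le_trans (hcap a)); apply: (le_trans (ler_norm _)).
  rewrite /Bd (bigD1 a) //= lerDl; apply: sumr_ge0 => j _; exact: normr_ge0.
have F0 : F !=set0.
  by exists (toV x0); apply/Fx; rewrite XtoV; split.
pose phi v := N * ln (Num.max (S (X v)) d) - T (X v).
have cphi : continuous phi.
  apply: contB; last exact: cont_lsum.
  apply: contM; first exact: contC.
  by apply: contLnMax => //; exact: cont_lsum.
have [cc /set_mem Fc hmax] := compact_EVT_max F0 cF (continuous_subspaceT cphi).
have [hfc hSc] := (Fx cc).1 Fc.
have phic : phi cc = N * ln (S (X cc)) - T (X cc) by rewrite /phi max_l.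
exists (X cc); split => // y hy.
rewrite (obj_pos N (X cc) (lt_le_trans hd hSc)).
case: (boolP (0 < S y)) => hSy; last by rewrite obj_npos // leNye.
rewrite obj_pos // lee_fin -phic.
case: (lerP d (S y)) => hdy.
  have := hmax (toV y) (mem_set _); rewrite /phi XtoV max_l //; apply.
  by apply/Fx; rewrite XtoV.
have hTy : 0 <= T y := lsum_ge0 _ _ tau_ge0 hy.1.
have hl : N * ln (S y) < N * ln d by rewrite ltr_pM2l // ltr_ln ?posrE.
have h0 : phi (toV x0) = o0 by rewrite /phi XtoV max_l.
have := hmax (toV x0) (mem_set _); rewrite h0 => h.
have h' : o0 <= phi cc by apply: h; apply/Fx; rewrite XtoV; split.
lra.
Qed.


Lemma key N1 N2 bC x1 : 0 < N1 -> N1 <= N2 -> cv_optimal b t p c Rc N1 bC x1 ->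
  exists x2, cv_optimal b t p c Rc N2 bC x2 /\ P x1 <= P x2.
Proof.
move=> hN1 hN12 [hf1 hopt1].
have [eN|ltN] := eqVneq N1 N2.
  by exists x1; rewrite -eN; split.
have hN2 : N1 < N2 by rewrite lt_neqAle ltN.
case: (boolP (0 < S x1)) => hS1; last first.
  exists x1; split => //; split => // y hy.
  have := hopt1 y hy; rewrite (obj_npos N1 x1 hS1).
  case: (boolP (0 < S y)) => hSy; first by rewrite (obj_pos N1 y hSy).
  by rewrite (obj_npos N2 y hSy) (obj_npos N2 x1 hS1).
have [x2 [hf2 hopt2]] := exists_opt N2 bC x1 (lt_le_trans hN1 hN12) hf1 hS1.
exists x2; split => //.
have h2 := hopt2 x1 hf1.
have h1 := hopt1 x2 hf2.
case: (boolP (0 < S x2)) => hS2; last first.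
  by move: h2; rewrite (obj_npos N2 x2 hS2) (obj_pos N2 x1 hS1).
move: h1 h2; rewrite (obj_pos N1 x1 hS1) (obj_pos N1 x2 hS2) (obj_pos N2 x1 hS1) (obj_pos N2 x2 hS2) !lee_fin => h1 h2.
have hl : ln (S x1) <= ln (S x2) by nra.
apply: pi_mono; first by rewrite -ler_ln ?posrE.
nra.
Qed.

End Model.

Theorem lemma2 (R : realType) (L : nat) (b t : 'I_L -> 'I_L -> R) (p c Rc : R)
  (hb : forall i j, 0 <= b i j)
  (hbi : forall i, 0 < brate b i)
  (ht : forall i j, i != j -> 0 < t i j)
  (ht0 : forall i, t i i = 0)
  (hp : 0 < p) (hc : 0 <= c) (hR0 : 0 < Rc) (hR1 : Rc < 1) :
  (forall N M1 M2, 0 < N -> 0 <= M1 -> M1 <= M2 ->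
     (opt_value b t p c Rc M1 N <= opt_value b t p c Rc M2 N)%E) /\
  (forall M N1 N2, 0 <= M -> 0 < N1 -> N1 <= N2 ->
     (opt_value b t p c Rc M N1 <= opt_value b t p c Rc M N2)%E).
Proof.
split.
  move=> N M1 M2 _ _ hM; apply: ereal_sup_le => v [bC [xA [xC [[h1 [h2 [h3 [h4 h5]]] [h6 ->]]]]]].
  exists bC, xA, xC; split => //; split => //.
  by repeat split => //; apply: (le_trans h5).
move=> M N1 N2 _ hN1 hN; apply: ge_ereal_sup => v [bC [xA [xC [hf [hopt ->]]]]].
have [x2 [hopt2 hP]] := @key _ _ b t p c Rc hb hbi ht ht0 hc hR0 hR1 _ _ _ _ hN1 hN hopt.
apply: (le_trans _ (ereal_sup_ubound _)); last first.
  by exists bC, xA, x2; split; [exact: hf | split; [exact: hopt2 | reflexivity]].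
by rewrite lee_fin lerD2l.
Qed.
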